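(* Let $v_1,\dots,v_m$ be vectors in the closed unit ball $B^n$ of $\mathbb{R}^n$, and assume there are positive weights $\beta_1,\dots,\beta_m$ with \[ \sum_i\beta_i=1,\qquad\sum_i\beta_iv_i=0,\qquad\sum_i\beta_i|v_i|^2=\theta\ \text{ for some }\theta\in(0,1]. \] Then the inradius of $(\operatorname{conv}\{v_1,\dots,v_m\})^\circ$ is at most $1/\theta$.
   Context: The polar of $S\subseteq\mathbb{R}^n$ is $S^\circ=\{p:\langle x,p\rangle\le1\ \forall x\in S\}$. The inradius of a convex set is the supremum of radii of Euclidean balls contained in it (within its affine hull). *)

(* Defs.v *)
From HB Require Import structures.
From mathcomp Require Import all_boot all_order all_algebra.
From mathcomp Require Import all_classical all_reals ereal.
Set Implicit Arguments. Unset Strict Implicit. Unset Printing Implicit Defensive.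
Import Order.TTheory GRing.Theory Num.Theory.
Local Open Scope ring_scope.
Local Open Scope classical_set_scope.

Section Defs.
Variables (R : realType) (n : nat).

Definition dotv (u v : 'rV[R]_n) : R := \sum_(k < n) u ord0 k * v ord0 k.
Definition enorm (u : 'rV[R]_n) : R := Num.sqrt (dotv u u).

Definition conv_hull (S : set 'rV[R]_n) : set 'rV[R]_n :=
  [set x | exists (k : nat) (w : 'I_k -> R) (y : 'I_k -> 'rV[R]_n),
     (forall j, 0 <= w j) /\ \sum_(j < k) w j = 1 /\ (forall j, S (y j)) /\
     x = \sum_(j < k) w j *: y j].

Definition aff_hull (S : set 'rV[R]_n) : set 'rV[R]_n :=
  [set x | exists (k : nat) (w : 'I_k -> R) (y : 'I_k -> 'rV[R]_n),
     \sum_(j < k) w j = 1 /\ (forall j, S (y j)) /\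
     x = \sum_(j < k) w j *: y j].

Definition polar (S : set 'rV[R]_n) : set 'rV[R]_n :=
  [set p | forall x, S x -> dotv x p <= 1].

Definition inradius (S : set 'rV[R]_n) : \bar R :=
  ereal_sup [set r%:E | r in [set r : R | 0 <= r /\ exists c, aff_hull S c /\
     [set y | aff_hull S y /\ enorm (y - c) <= r] `<=` S]].

End Defs.

(* Main.v *)
Require Import Defs.
From HB Require Import structures.
From mathcomp Require Import all_boot all_order all_algebra.
From mathcomp Require Import all_classical all_reals ereal.
From mathcomp Require Import ring lra.
Import Order.TTheory GRing.Theory Num.Theory.
Local Open Scope ring_scope.
Local Open Scope classical_set_scope.

Section H.
Context {R : realType} {n : nat}.
Implicit Types u w : 'rV[R]_n.

Lemma dotvC u w : dotv u w = dotv w u.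
Proof. by apply: eq_bigr => k _; rewrite mulrC. Qed.

Lemma dotvDl u1 u2 w : dotv (u1 + u2) w = dotv u1 w + dotv u2 w.
Proof. by rewrite /dotv -big_split; apply: eq_bigr => k _; rewrite mxE mulrDl. Qed.

Lemma dotvZl a u w : dotv (a *: u) w = a * dotv u w.
Proof. by rewrite /dotv mulr_sumr; apply: eq_bigr => k _; rewrite mxE mulrA. Qed.

Lemma dotv0l w : dotv 0 w = 0.
Proof. by rewrite /dotv big1 // => k _; rewrite mxE mul0r. Qed.

Lemma dotv_suml (k : nat) (a : 'I_k -> R) (y : 'I_k -> 'rV[R]_n) w :
  dotv (\sum_(j < k) a j *: y j) w = \sum_(j < k) a j * dotv (y j) w.
Proof.
elim: k a y => [|k IH] a y; first by rewrite !big_ord0 dotv0l.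
by rewrite !big_ord_recr /= dotvDl dotvZl IH.
Qed.

Lemma dotvvge0 u : 0 <= dotv u u.
Proof. by apply: sumr_ge0 => k _; rewrite -expr2 sqr_ge0. Qed.

Lemma enorm_sq u : enorm u ^+ 2 = dotv u u.
Proof. by rewrite /enorm sqr_sqrtr // dotvvge0. Qed.

Lemma dotv_le_half u w : dotv u w <= (dotv u u + dotv w w) / 2.
Proof.
rewrite /dotv -big_split /= mulr_suml; apply: ler_sum => k _.
set a := u ord0 k; set b := w ord0 k.
have := sqr_ge0 (a - b); rewrite expr2; lra.
Qed.

Lemma enorm_le_one_dot {u w} : enorm u <= 1 -> enorm w <= 1 -> dotv u w <= 1.
Proof.
move=> hu hw.
have hu2 : dotv u u <= 1.
  by rewrite -enorm_sq exprn_ile1 // sqrtr_ge0.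
have hw2 : dotv w w <= 1.
  by rewrite -enorm_sq exprn_ile1 // sqrtr_ge0.
have := dotv_le_half u w; lra.
Qed.
End H.
Theorem mainTheorem12 (R : realType) (n m : nat)
    (v : 'I_m -> 'rV[R]_n) (beta : 'I_m -> R) (theta : R) :
  (forall i, enorm (v i) <= 1) ->
  (forall i, 0 < beta i) ->
  \sum_(i < m) beta i = 1 ->
  \sum_(i < m) beta i *: v i = 0 ->
  0 < theta -> theta <= 1 ->
  \sum_(i < m) beta i * enorm (v i) ^+ 2 = theta ->
  (inradius (polar (conv_hull (range v))) <= (theta^-1)%:E)%E.
Proof.
move=> hv hb hs hz ht0 ht1 hth.
set P := polar (conv_hull (range v)).
have inP : forall p, P p -> forall i, dotv (v i) p <= 1.
  move=> p hp i; apply: hp; exists 1%N, (fun _ => 1), (fun _ => v i).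
  by rewrite !big_ord1 scale1r; split=> //; split=> //; split=> // j; exists i.
have vP : forall i, P (v i).
  move=> i x [k [w [y [w0 [ws [yr ->]]]]]]; rewrite dotv_suml -ws.
  apply: ler_sum => j _; rewrite -[X in _ <= X]mulr1; apply: ler_wpM2l => //.
  by case: (yr j) => i' _ <-; apply: enorm_le_one_dot.
have P0 : P 0 by move=> x _; rewrite dotvC dotv0l.
rewrite /inradius; apply: ub_ereal_sup => _ [r [r0 [c [cA hball]]] <-]; rewrite lee_fin.
have cP : P c.
  apply: hball; split=> //; rewrite subrr /enorm dotv0l sqrtr0 //.
have key : forall i, dotv (v i) c + r * dotv (v i) (v i) <= 1.
  move=> i; have := inP (c + r *: v i) _ i; rewrite dotvC dotvDl dotvZl dotvC; apply.
  apply: hball; split.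
    exists 3%N, (fun j => nth 0 [:: 1; r; -r] j), (fun j => nth 0 [:: c; v i; 0] j).
    split; first by rewrite !big_ord_recl big_ord0 /=; ring.
    split; first by case=> [[|[|[|j]]] hj] //=.
    by rewrite !big_ord_recl big_ord0 /= scale1r scaler0 !addr0.
  rewrite addrC addKr.
  have hd := enorm_le_one_dot (hv i) (hv i) : dotv (v i) (v i) <= 1.
  rewrite -(ler_pXn2r (_ : 0 < 2)%N) ?nnegrE ?sqrtr_ge0 // enorm_sq dotvZl dotvC dotvZl.
  rewrite mulrA -expr2 -[X in _ <= X]mulr1; apply: ler_wpM2l => //; exact: sqr_ge0.
have : r * theta <= 1.
  rewrite -hs -hth -[X in X <= _]add0r -{1}(dotv0l c) -hz dotv_suml mulr_sumr -big_split /=.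
  apply: ler_sum => i _; rewrite enorm_sq -[X in _ <= X]mulr1 mulrCA -mulrDr.
  by apply: ler_wpM2l; [exact: ltW | exact: key].
move=> h; rewrite -(ler_pM2r ht0) mulVf ?gt_eqF //.
Qed.
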